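(* Let $h:(\mathbb{R}^n,0)\to(\mathbb{R}^n,0)$ be a bi-Lipschitz homeomorphism germ, and let $U,V\subset\mathbb{R}^n$ be set-germs at $0$ with $0\in\overline{U}\cap\overline{V}$. Suppose that $D(U\cap V)=D(U)\cap D(V)$, and that $U\cap V$ and $h(U)$ satisfy condition (SSP). Then $D(h(U\cap V))=D(h(U))\cap D(h(V))$.
   Context: For a set-germ $A\subset\mathbb{R}^n$ at $0$, $D(A)=\{a\in S^{n-1}:\exists\, x_i\in A\setminus\{0\},\ x_i\to0,\ x_i/\|x_i\|\to a\}$ (empty if no such sequences exist). For sequences, $\|u_m\|\ll\|v_m\|,\|w_m\|$ means $\|u_m\|/\|v_m\|\to0$ and $\|u_m\|/\|w_m\|\to0$. A set-germ $A$ satisfies condition (SSP) if for every sequence $a_m\in\mathbb{R}^n$ tending to $0$ with $\lim a_m/\|a_m\|\in D(A)$ there is a sequence $b_m\in A$ with $\|a_m-b_m\|\ll\|a_m\|,\|b_m\|$. A bi-Lipschitz homeomorphism germ is a homeomorphism germ $h$ with $h(0)=0$ and constants $0<K_1\le K_2$ with $K_1\|x-y\|\le\|h(x)-h(y)\|\le K_2\|x-y\|$ near $0$. *)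

(* Defs.v *)
From HB Require Import structures.
From mathcomp Require Import all_boot all_order all_algebra.
From mathcomp Require Import all_classical all_reals all_analysis.
Set Implicit Arguments. Unset Strict Implicit. Unset Printing Implicit Defensive.
Import Order.TTheory GRing.Theory Num.Theory.
Local Open Scope classical_set_scope.
Local Open Scope ring_scope.

Section Defs.
Context {R : realType} {n : nat}.
Local Notation vec := 'rV[R]_n.

Definition enorm (x : vec) : R := Num.sqrt (\sum_(i < n) (x ord0 i) ^+ 2).

Definition eball0 (r : R) : set vec := [set x | enorm x < r].

Definition tends0 (u : nat -> R) : Prop := u @ \oo --> (0 : R^o).

Definition seq_to0 (x : nat -> vec) : Prop := tends0 (fun m => enorm (x m)).
Definition dir_to (x : nat -> vec) (a : vec) : Prop :=
  tends0 (fun m => enorm ((enorm (x m))^-1 *: x m - a)).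

Definition Dset (A : set vec) : set vec :=
  [set a | enorm a = 1 /\
     exists x : nat -> vec, (forall m, A (x m) /\ x m <> 0) /\
       seq_to0 x /\ dir_to x a].

Definition negl (u v : nat -> vec) : Prop :=
  forall e : R, 0 < e -> exists N : nat, forall m : nat, (N <= m)%N ->
    enorm (u m) <= e * enorm (v m).

Definition SSP (A : set vec) : Prop :=
  forall a : nat -> vec, seq_to0 a -> (exists d, Dset A d /\ dir_to a d) ->
    exists b : nat -> vec, (forall m, A (b m)) /\
      negl (fun m => a m - b m) a /\ negl (fun m => a m - b m) b.

Definition in_closure0 (A : set vec) : Prop :=
  forall e : R, 0 < e -> exists x, A x /\ enorm x < e.

(* h is a bi-Lipschitz homeomorphism germ (R^n,0) -> (R^n,0), represented
   on the ball of radius r: h 0 = 0, h is bi-Lipschitz with constants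
   0 < K1 <= K2 on that ball (hence injective, continuous with continuous
   inverse there), and its image contains a neighbourhood of 0. *)
Definition bilip_homeo_germ (h : vec -> vec) (r K1 K2 : R) : Prop :=
  0 < r /\ 0 < K1 /\ K1 <= K2 /\ h 0 = 0 /\
      (forall x y, eball0 r x -> eball0 r y ->
         K1 * enorm (x - y) <= enorm (h x - h y) /\
         enorm (h x - h y) <= K2 * enorm (x - y)) /\
      (exists s : R, 0 < s /\ eball0 s `<=` h @` eball0 r).

Definition gimage (h : vec -> vec) (r : R) (A : set vec) : set vec :=
  h @` (A `&` eball0 r).

End Defs.

(* Main.v *)
Require Import Defs.
From HB Require Import structures.
From mathcomp Require Import all_boot all_order all_algebra.
From mathcomp Require Import all_classical all_reals all_analysis.
From mathcomp Require Import ring lra.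
Import Order.TTheory GRing.Theory Num.Theory.
Import numFieldNormedType.Exports.
Local Open Scope classical_set_scope.
Local Open Scope ring_scope.
Section N.
Context {R : realType} {n : nat}.
Local Notation vec := 'rV[R]_n.
Implicit Types x y : vec.

Lemma ss_ge0 x : 0 <= \sum_(i < n) (x ord0 i) ^+ 2.
Proof. by apply: sumr_ge0 => i _; exact: sqr_ge0. Qed.

Lemma enorm_ge0 x : 0 <= enorm x.
Proof. exact: sqrtr_ge0. Qed.

Lemma enorm_sq x : enorm x ^+ 2 = \sum_(i < n) (x ord0 i) ^+ 2.
Proof. by rewrite /enorm sqr_sqrtr // ss_ge0. Qed.

Lemma enorm0 : enorm (0 : vec) = 0.
Proof. by rewrite /enorm big1 ?sqrtr0 // => i _; rewrite mxE expr0n. Qed.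

Lemma coord_le x i : `|x ord0 i| <= enorm x.
Proof.
rewrite -sqrtr_sqr; apply: ler_wsqrtr.
rewrite (bigD1 i) //= lerDl; apply: sumr_ge0 => j _; exact: sqr_ge0.
Qed.

Lemma enorm_eq0 x : enorm x = 0 -> x = 0.
Proof.
move=> H; apply/matrixP => a j; rewrite (ord1 a) mxE.
by apply/eqP; rewrite -normr_le0 -H coord_le.
Qed.

Lemma enormZ (k : R) x : enorm (k *: x) = `|k| * enorm x.
Proof.
rewrite /enorm -sqrtr_sqr -sqrtrM ?sqr_ge0 // mulr_sumr; congr Num.sqrt.
by apply: eq_bigr => i _; rewrite mxE exprMn.
Qed.

Lemma enormN x : enorm (- x) = enorm x.
Proof. by rewrite -scaleN1r enormZ normrN normr1 mul1r. Qed.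

Lemma enormB x y : enorm (x - y) = enorm (y - x).
Proof. by rewrite -enormN opprB. Qed.

Lemma cs x y : \sum_(i < n) x ord0 i * y ord0 i <= enorm x * enorm y.
Proof.
have [x0|xn0] := eqVneq (enorm x) 0.
  rewrite x0 mul0r big1 // => i _.
  by rewrite (@enorm_eq0 x x0) mxE mul0r.
have [y0|yn0] := eqVneq (enorm y) 0.
  rewrite y0 mulr0 big1 // => i _.
  by rewrite (@enorm_eq0 y y0) mxE mulr0.
set a := enorm x; set b := enorm y.
have a0 : 0 < a by rewrite lt_def xn0 enorm_ge0.
have b0 : 0 < b by rewrite lt_def yn0 enorm_ge0.
have key i : x ord0 i * y ord0 i <=
   (b / (2 * a)) * x ord0 i ^+ 2 + (a / (2 * b)) * y ord0 i ^+ 2.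
  set u := x ord0 i; set v := y ord0 i.
  have : 0 <= (b * u - a * v) ^+ 2 / (2 * a * b).
    by apply: divr_ge0; [exact: sqr_ge0| rewrite !mulr_ge0 // ltW].
  have -> : (b * u - a * v) ^+ 2 / (2 * a * b) =
     (b / (2 * a)) * u ^+ 2 + (a / (2 * b)) * v ^+ 2 - u * v.
    by field; rewrite ?gt_eqF.
  by rewrite subr_ge0.
apply: le_trans (ler_sum _ (fun i _ => key i)) _.
rewrite big_split /= -!mulr_sumr -!enorm_sq -/a -/b.
rewrite le_eqVlt; apply/orP; left; apply/eqP; by field; rewrite ?gt_eqF.
Qed.

Lemma enormD x y : enorm (x + y) <= enorm x + enorm y.
Proof.
rewrite -(ler_pXn2r (_ : (0 < 2)%N)) ?nnegrE ?addr_ge0 ?enorm_ge0 //.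
rewrite enorm_sq sqrrD !enorm_sq.
have -> : \sum_(i < n) (x + y) ord0 i ^+ 2 =
   \sum_(i < n) x ord0 i ^+ 2 + \sum_(i < n) (x ord0 i * y ord0 i) *+ 2
   + \sum_(i < n) y ord0 i ^+ 2.
  by rewrite -!big_split /=; apply: eq_bigr => i _; rewrite mxE sqrrD.
rewrite sumrMnl lerD2r lerD2l lerMn2r /=; exact: cs.
Qed.

Lemma enorm_sub_ge x y : enorm x - enorm y <= enorm (x - y).
Proof.
rewrite lerBlDr; apply: le_trans (enormD _ _); by rewrite subrK.
Qed.

Lemma enorm_le_sum x : enorm x <= \sum_(i < n) `|x ord0 i|.
Proof.
rewrite -(ler_pXn2r (_ : (0 < 2)%N)) ?nnegrE ?enorm_ge0 ?sumr_ge0 //.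
rewrite enorm_sq.
pose K (a b : R) := a <= b ^+ 2 /\ 0 <= b.
suff [] : K (\sum_(i < n) x ord0 i ^+ 2) (\sum_(i < n) `|x ord0 i|) by [].
apply: (big_rec2 K); first by rewrite /K expr0n.
move=> i a b _ [H1 H2]; split; last by rewrite addr_ge0.
rewrite sqrrD real_normK ?num_real // -addrA lerD2l.
apply: le_trans H1 _; rewrite lerDr; by rewrite mulrn_wge0 // mulr_ge0.
Qed.

Definition ev0 (u : nat -> R) := forall e : R, 0 < e -> exists N, forall m, (N <= m)%N -> `|u m| < e.
Definition dir (z : vec) : vec := (enorm z)^-1 *: z.

Lemma ev0_sub u (f : nat -> nat) : ev0 u -> (forall m, (m <= f m)%N) -> ev0 (fun m => u (f m)).
Proof.
move=> H Hf e e0; have [N HN] := H e e0; exists N => m Hm; apply: HN.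
exact: leq_trans Hm (Hf m).
Qed.

Lemma dir_bound x y : x <> 0 -> enorm (dir y - dir x) <= 2 * enorm (y - x) / enorm x.
Proof.
move=> xn0.
have a0 : 0 < enorm x.
  by rewrite lt_def enorm_ge0 andbT; apply/eqP => /enorm_eq0.
set a := enorm x in a0 *.
have [->|yn0] := eqVneq y 0.
  rewrite /dir scaler0 sub0r enormN enormZ sub0r enormN ger0_norm ?invr_ge0 ?enorm_ge0 //.
  rewrite -/a mulVf ?gt_eqF // mulfK ?gt_eqF // ler1n //.
have b0 : 0 < enorm y.
  by rewrite lt_def enorm_ge0 andbT; apply/eqP => /enorm_eq0; apply/eqP.
set b := enorm y in b0 *.
have -> : dir y - dir x = a^-1 *: (y - x) + (b^-1 - a^-1) *: y.
  by rewrite /dir -/a -/b scalerBr scalerBl [RHS]addrC [RHS]addrA subrK.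
apply: le_trans (enormD _ _) _.
have ai : 0 <= a^-1 by rewrite invr_ge0 ltW.
rewrite !enormZ -/b (ger0_norm ai).
have -> : `|b^-1 - a^-1| * b = `|a - b| / a.
  have e1 : (b^-1 - a^-1) * b = (a - b) / a by field; rewrite ?gt_eqF.
  by rewrite -{2}(ger0_norm (ltW b0)) -normrM e1 normrM (ger0_norm ai).
have : `|a - b| <= enorm (y - x).
  rewrite ler_norml; apply/andP; split.
    by rewrite lerNl opprB -/a -/b; apply: enorm_sub_ge.
  by rewrite enormB; apply: enorm_sub_ge.
move=> H.
rewrite (mulrC a^-1) -mulrDl ler_wpM2r //; lra.
Qed.

Lemma transfer (x z : nat -> vec) c :
  (forall m, x m <> 0) -> ev0 (fun m => enorm (x m)) ->
  ev0 (fun m => enorm (dir (x m) - c)) ->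
  (forall e : R, 0 < e -> exists N, forall m, (N <= m)%N -> enorm (z m - x m) <= e * enorm (x m)) ->
  [/\ ev0 (fun m => enorm (z m)), ev0 (fun m => enorm (dir (z m) - c)) &
     exists N, forall m, (N <= m)%N -> z m <> 0].
Proof.
move=> xn0 Hx Hd Hr.
have h2 : (0:R) < 2 by lra.
have h4 : (0:R) < 4 by lra.
split.
- move=> e e0; have [N1 H1] := Hr 1 ltr01.
  have [N2 H2] := Hx (e / 2) (divr_gt0 e0 h2).
  exists (maxn N1 N2) => m; rewrite geq_max => /andP[m1 m2].
  have := H1 m m1; have := H2 m m2; rewrite !ger0_norm ?enorm_ge0 // mul1r => g2 g1.
  have : enorm (z m) <= enorm (z m - x m) + enorm (x m).
    by apply: le_trans (enormD _ _); rewrite subrK.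
  move=> h3; apply: le_lt_trans h3 _.
  have -> : e = e / 2 + e / 2 by field.
  apply: le_lt_trans (lerD g1 (lexx _)) _; lra.
- move=> e e0; have [N1 H1] := Hr (e / 4) (divr_gt0 e0 h4).
  have [N2 H2] := Hd (e / 2) (divr_gt0 e0 h2).
  exists (maxn N1 N2) => m; rewrite geq_max => /andP[m1 m2].
  have := H1 m m1; have := H2 m m2; rewrite !ger0_norm ?enorm_ge0 // => g2 g1.
  have hb := @dir_bound (x m) (z m) (xn0 m).
  have xp : 0 < enorm (x m).
    by rewrite lt_def enorm_ge0 andbT; apply/eqP => /enorm_eq0; apply: xn0.
  have : enorm (dir (z m) - c) <= enorm (dir (z m) - dir (x m)) + enorm (dir (x m) - c).
    by apply: le_trans (enormD _ _); rewrite addrA subrK.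
  move=> h3; apply: le_lt_trans h3 _.
  have k4 : enorm (dir (z m) - dir (x m)) <= e / 2.
    apply: le_trans hb _; rewrite ler_pdivrMr //.
    apply: le_trans (ler_wpM2l (ler0n _ 2) g1) _.
    by rewrite le_eqVlt; apply/orP; left; apply/eqP; field.
  have -> : e = e / 2 + e / 2 by field.
  exact: ler_ltD k4 g2.
- have [N1 H1] := Hr (1 / 2) (divr_gt0 ltr01 h2).
  exists N1 => m /H1 h1 zm0; move: h1; rewrite zm0 sub0r enormN => h1.
  have xp : 0 < enorm (x m).
    by rewrite lt_def enorm_ge0 andbT; apply/eqP => /enorm_eq0; apply: xn0.
  lra.
Qed.

Lemma bnd (u : nat -> R) : (forall m, `|u m| <= 1) -> bounded_fun u.
Proof.
move=> H. rewrite /=.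

apply: filterS (nbhs_pinfty_ge (num_real (1:R))) => M HM x _ /=.
exact: le_trans (H x) HM.
Qed.
Lemma incr_ge (f : nat -> nat) : increasing_seq f -> forall m, (m <= f m)%N.
Proof.
move/increasing_seqP => H; elim => [|m IH] //.
apply: leq_ltn_trans IH _; exact: H.
Qed.
Lemma cvgn_ex (u : nat -> R) : cvgn u -> exists l, forall e : R, 0 < e -> exists N, forall m, (N <= m)%N -> `|u m - l| < e.
Proof.
move/cvg_ex => [l /cvgrPdist_lt Hl]; exists l => e e0.
have [N _ HN] := Hl e e0; exists N => m /HN /=; by rewrite distrC.
Qed.

Lemma nearP (P : nat -> Prop) : (\forall m \near \oo, P m) <-> exists N, forall m, (N <= m)%N -> P m.
Proof.
split.
  by case=> N _ HN; exists N => m /HN.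
case=> N HN; apply: filterS (nbhs_infty_ge N) => m; exact: HN.
Qed.

Lemma tends0E u : tends0 u <-> ev0 u.
Proof.
rewrite /tends0 /ev0; split.
  move/cvgrPdist_lt => H e e0; apply/nearP; move: (H e e0).
  by apply: filterS => m; rewrite sub0r normrN.
move=> H; apply/cvgrPdist_lt => e e0; apply/nearP; have [N HN] := H e e0.
by exists N => m /HN; rewrite sub0r normrN.
Qed.

Lemma enorm_dist x y : `|enorm x - enorm y| <= enorm (x - y).
Proof.
rewrite ler_norml; apply/andP; split.
  by rewrite lerNl opprB enormB; apply: enorm_sub_ge.
by apply: enorm_sub_ge.
Qed.

Lemma enorm_gt0 x : x <> 0 -> 0 < enorm x.
Proof. by move=> xn0; rewrite lt_def enorm_ge0 andbT; apply/eqP => /enorm_eq0. Qed.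

Lemma enorm_dir x : x <> 0 -> enorm (dir x) = 1.
Proof.
move=> /enorm_gt0 x0; rewrite /dir enormZ ger0_norm ?invr_ge0 ?ltW //.
by rewrite mulVf // gt_eqF.
Qed.

Lemma ev0_dom (f g : nat -> R) k : 0 < k -> ev0 f -> (forall m, `|g m| <= k * `|f m|) -> ev0 g.
Proof.
move=> k0 Hf Hg e e0; have [N HN] := Hf (e / k) (divr_gt0 e0 k0).
exists N => m /HN h; apply: le_lt_trans (Hg m) _.
by rewrite -ltr_pdivlMl // mulrC.
Qed.

Lemma sum_ev0 (g : nat -> 'I_n -> R) : (forall i, ev0 (fun m => g m i)) ->
  ev0 (fun m => \sum_(i < n) `|g m i|).
Proof.
move=> H e e0.
have np : (0:R) < n%:R + 1 by have := ler0n R n; lra.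
have e'0 : 0 < e / (n%:R + 1) by rewrite divr_gt0.
have /choice [N HN] : forall i, exists N, forall m, (N <= m)%N -> `|g m i| < e / (n%:R + 1).
  by move=> i; exact: H i _ e'0.
exists (\max_(i < n) N i) => m Hm.
rewrite ger0_norm ?sumr_ge0 //.
apply: le_lt_trans (ler_sum _ (fun i _ => ltW (HN i m (leq_trans (leq_bigmax i) Hm)))) _.
rewrite sumr_const card_ord -[_ *+ n]mulr_natl mulrA ltr_pdivrMr //.
have := ler0n R n; nra.
Qed.

Lemma compact_seq (w : nat -> vec) : (forall m, enorm (w m) <= 1) ->
  exists phi c, (forall m, (m <= phi m)%N) /\ ev0 (fun m => enorm (w (phi m) - c)).
Proof.
move=> Hw.
have step : forall k, exists phi : nat -> nat, (forall m, (m <= phi m)%N) /\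
    forall i : 'I_n, (i < k)%N -> exists l, ev0 (fun m => w (phi m) ord0 i - l).
  elim=> [|k [phi [Hphi Hi]]].
    by exists id; split => // i.
  case: (ltnP k n) => [kn|nk].
  - pose u := fun m => w (phi m) ord0 (Ordinal kn).
    have /bolzano_weierstrass [psi psiI /cvgn_ex [l Hl]] : bounded_fun u.
      by apply: bnd => m; apply: le_trans (coord_le _ _) (Hw _).
    have Hpsi := incr_ge psi psiI.
    exists (phi \o psi); split.
      by move=> m /=; apply: leq_trans (Hpsi m) (Hphi _).
    move=> i; rewrite ltnS leq_eqVlt => /orP[/eqP ik|ik].
      exists l; have -> : i = Ordinal kn by apply: val_inj.
      exact: Hl.
    have [l' Hl'] := Hi i ik; exists l'.
    exact: (ev0_sub _ _ Hl' Hpsi).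
  - exists phi; split => // i ik; apply: Hi; exact: leq_trans (ltn_ord i) nk.
have [phi [Hphi Hi]] := step n.
have /choice [L HL] : forall i : 'I_n, exists l, ev0 (fun m => w (phi m) ord0 i - l).
  by move=> i; exact: Hi i (ltn_ord i).
exists phi, (\row_i L i); split => // e e0.
have [N HN] := @sum_ev0 (fun m i => w (phi m) ord0 i - L i) HL e e0.
exists N => m /HN H; rewrite ger0_norm ?enorm_ge0 //.
apply: le_lt_trans (enorm_le_sum _) _.
rewrite ger0_norm ?sumr_ge0 // in H; apply: le_lt_trans H.
by apply: ler_sum => i _; rewrite !mxE.
Qed.

Lemma Dset_ev (A : set vec) a (x : nat -> vec) N : enorm a = 1 ->
  (forall m, (N <= m)%N -> A (x m) /\ x m <> 0) ->
  ev0 (fun m => enorm (x m)) -> ev0 (fun m => enorm (dir (x m) - a)) -> Dset A a.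
Proof.
move=> a1 HA H1 H2; split => //; exists (fun m => x (m + N)); split; [|split].
- move=> m; apply: HA; exact: leq_addl.
- rewrite /seq_to0; apply/tends0E; exact: (ev0_sub _ _ H1 (fun m => leq_addr N m)).
- rewrite /dir_to; apply/tends0E; exact: (ev0_sub _ _ H2 (fun m => leq_addr N m)).
Qed.

End N.


Theorem theorem2p30 (R : realType) (n : nat) (h : 'rV[R]_n -> 'rV[R]_n)
    (r K1 K2 : R) (U V : set 'rV[R]_n) :
  bilip_homeo_germ h r K1 K2 ->
  in_closure0 U -> in_closure0 V ->
  Dset (U `&` V) = Dset U `&` Dset V ->
  SSP (U `&` V) ->
  SSP (gimage h r U) ->
  Dset (gimage h r (U `&` V)) = Dset (gimage h r U) `&` Dset (gimage h r V).
Proof.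
move=> [r0 [K10 [K12 [h0 [Hlip _]]]]] _ _ DUV SUV SU.
have K20 : 0 < K2 by apply: lt_le_trans K12.
have ball0 : eball0 r (0 : 'rV[R]_n) by rewrite /eball0 /= enorm0.
have Kmin : forall x, eball0 r x -> K1 * enorm x <= enorm (h x).
  by move=> x bx; have := (Hlip x 0 bx ball0).1; rewrite !subr0 h0 subr0.
apply/seteqP; split.
  move=> a [a1 [x [Hx [H1 H2]]]]; split; split => //; exists x; split => //;
    move=> m; have [[p [[Up Vp] bp] hp] xn] := Hx m; split => //; exists p => //.
move=> a [DhU DhV].
have [a1 [y [Hy [Hy0 Hyd]]]] := DhV.
have [b [Hb [Hn1 Hn2]]] := SU y Hy0 (ex_intro _ a (conj DhU Hyd)).
have /choice [v Hv] : forall m, exists v, (V v /\ eball0 r v) /\ h v = y m.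
  by move=> m; have [[p Hp hp] _] := Hy m; exists p.
have /choice [u Hu] : forall m, exists u, (U u /\ eball0 r u) /\ h u = b m.
  by move=> m; have [p Hp hp] := Hb m; exists p.
have yn0 : forall m, y m <> 0 by move=> m; exact: (Hy m).2.
have vn0 : forall m, v m <> 0.
  by move=> m v0; apply: (yn0 m); rewrite -(Hv m).2 v0 h0.
have Ey0 : ev0 (fun m => enorm (y m)) by apply/tends0E.
have Eyd : ev0 (fun m => enorm (dir (y m) - a)) by apply/tends0E.
have hv1 : forall m, K1 * enorm (v m) <= enorm (y m).
  by move=> m; rewrite -(Hv m).2; apply: Kmin; exact: (Hv m).1.2.
have hv2 : forall m, enorm (y m) <= K2 * enorm (v m).
  move=> m; have := (Hlip (v m) 0 (Hv m).1.2 ball0).2.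
  by rewrite !subr0 h0 subr0 (Hv m).2.
have Hd1 : forall m, enorm (dir (v m)) <= 1 by move=> m; rewrite enorm_dir.
have [phi [c [Hphi Hc]]] := compact_seq (fun m => dir (v m)) Hd1.
have c1 : enorm c = 1.
  apply/eqP; rewrite eq_sym -subr_eq0; apply/negPn/negP => ne.
  have npos : 0 < `|1 - enorm c| by rewrite normr_gt0.
  have [N HN] := Hc _ npos.
  have := HN N (leqnn N); rewrite ger0_norm ?enorm_ge0 //.
  have := enorm_dist (dir (v (phi N))) c; rewrite enorm_dir //.
  by move=> H1 H2; have := le_lt_trans H1 H2; rewrite ltxx.
have Ev0 : ev0 (fun m => enorm (v (phi m))).
  have Ki : 0 < K1^-1 by rewrite invr_gt0.
  apply: (ev0_dom _ _ _ Ki (ev0_sub _ _ Ey0 Hphi)) => m.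
  rewrite !ger0_norm ?enorm_ge0 // ler_pdivlMl //; exact: hv1.
have cV : Dset V c.
  apply: (Dset_ev _ _ (fun m => v (phi m)) 0 c1 _ Ev0 Hc) => m _; split; [exact: (Hv _).1.1| exact: vn0].
have cU : Dset U c.
  have Hr : forall e : R, 0 < e -> exists N, forall m, (N <= m)%N ->
      enorm (u (phi m) - v (phi m)) <= e * enorm (v (phi m)).
    move=> e e0.
    have e'0 : 0 < e * K1 / K2 by rewrite !divr_gt0 ?mulr_gt0.
    have [N HN] := Hn1 _ e'0; exists N => m Hm.
    have h1 := HN (phi m) (leq_trans Hm (Hphi m)); simpl in h1.
    have h2 := (Hlip (u (phi m)) (v (phi m)) (Hu _).1.2 (Hv _).1.2).1.
    rewrite (Hu _).2 (Hv _).2 [enorm (b _ - _)]enormB in h2.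
    have h3 := hv2 (phi m).
    rewrite -(ler_pM2l K10); apply: le_trans h2 _; apply: le_trans h1 _.
    apply: le_trans (ler_wpM2l (ltW e'0) h3) _.
    by rewrite le_eqVlt; apply/orP; left; apply/eqP; field; rewrite gt_eqF.
  have [Eu0 Eud [Nu Hnz]] := transfer (fun m => v (phi m)) (fun m => u (phi m)) c
     (fun m => vn0 (phi m)) Ev0 Hc Hr.
  apply: (Dset_ev _ _ _ Nu c1 _ Eu0 Eud) => m Hm; split; [exact: (Hu _).1.1| exact: Hnz].
have cUV : Dset (U `&` V) c by rewrite DUV.
have [w [Hw [Hn3 Hn4]]] := SUV (fun m => v (phi m)) (proj2 (tends0E _) Ev0)
    (ex_intro _ c (conj cUV (proj2 (tends0E _) Hc))).
have [Ew0 Ewd [Nw Hwnz]] : _ := transfer (fun m => v (phi m)) w c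
     (fun m => vn0 (phi m)) Ev0 Hc
     (fun e e0 => let: ex_intro N HN := Hn3 e e0 in
        ex_intro _ N (fun m Hm => eq_ind _ (fun t => t <= _) (HN m Hm) _ (enormB _ _))).
have [Nb Hb'] := Ew0 r r0.
have bw : forall m, (Nb <= m)%N -> eball0 r (w m).
  by move=> m /Hb'; rewrite ger0_norm ?enorm_ge0.
have Hr : forall e : R, 0 < e -> exists N, forall m, (N <= m)%N ->
    enorm (h (w m) - y (phi m)) <= e * enorm (y (phi m)).
  move=> e e0.
  have e'0 : 0 < e * K1 / K2 by rewrite !divr_gt0 ?mulr_gt0.
  have [N HN] := Hn3 _ e'0; exists (maxn N Nb) => m; rewrite geq_max => /andP[m1 m2].
  have h1 := HN m m1; simpl in h1.
  have h2 := (Hlip (w m) (v (phi m)) (bw m m2) (Hv _).1.2).2.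
  rewrite (Hv _).2 [enorm (w m - _)]enormB in h2.
  have h3 := hv1 (phi m).
  apply: le_trans h2 _; apply: le_trans (ler_wpM2l (ltW K20) h1) _.
  have -> : K2 * (e * K1 / K2 * enorm (v (phi m))) = e * (K1 * enorm (v (phi m))).
    by field; rewrite gt_eqF.
  by rewrite ler_wpM2l // ltW.
have [Eh0 Ehd [Nh Hhnz]] := transfer (fun m => y (phi m)) (fun m => h (w m)) a
     (fun m => yn0 (phi m)) (ev0_sub _ _ Ey0 Hphi) (ev0_sub _ _ Eyd Hphi) Hr.
apply: (Dset_ev _ _ _ (maxn Nb Nh) a1 _ Eh0 Ehd) => m; rewrite geq_max => /andP[m1 m2].
split; last exact: Hhnz.
exists (w m) => //; split; [exact: Hw| exact: bw].
Qed.
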